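(* Let $A=[A_1,\dots,A_n]\in\mathbb{R}^{p\times n}$ satisfy $A\mathbf{1}=\mathbf{0}$, and let $r$ be a positive integer with $r\le \operatorname{rank}(A)$. Let $A=U\Sigma V$ be the compact SVD of $A$ with singular values in descending order, where $V$ has orthonormal rows, and let $V_{1:r}$ denote the first $r$ rows of $V$. Put $\beta=-\min_{i,j}(A^TA)_{ij}$, $\tilde A=\begin{bmatrix}\sqrt{\beta}\,\mathbf{1}^T\\ A\end{bmatrix}$, $W=\tilde A^T\tilde A$ and $L=\operatorname{diag}(W\mathbf{1})-W$. Then $W$ has nonnegative entries, $W_{ij}=\phi(A_i,A_j)$ for the linear kernel $\phi(A_i,A_j)=A_i^TA_j+\beta$, and $L$ is its graph Laplacian. Moreover, the PCA problem $$\min_{D\in\mathbb{R}^{p\times r},\,X\in\mathbb{R}^{r\times n}}\|A-DX\|_F^2\quad\text{s.t. } XX^T=I$$ and the Laplacian-eigenmap problem $$\min_{X\in\mathbb{R}^{r\times n}}\operatorname{tr}\{\tilde XL\tilde X^T\}\quad\text{s.t. }\tilde X=\begin{bmatrix}\tfrac{1}{\sqrt n}\mathbf{1}^T\\ X\end{bmatrix},\ \tilde X\tilde X^T=I$$ have the same solutions $X$; in particular $X=V_{1:r}$ is a common solution.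
   Context: $\mathbf{1}$ denotes the all-ones vector of the appropriate length and $\operatorname{diag}(v)$ the diagonal matrix with diagonal $v$. Columns of $A$ are the $n$ data samples. *)

(* Defs.v *)
From HB Require Import structures.
From mathcomp Require Import all_boot all_order all_algebra.
Set Implicit Arguments. Unset Strict Implicit. Unset Printing Implicit Defensive.
Import Order.TTheory GRing.Theory Num.Theory.
Local Open Scope ring_scope.

Section Defs.
Variable R : rcfType.

Definition ones (n : nat) : 'cV[R]_n := const_mx 1.

Definition is_min_entry (m n : nat) (M : 'M[R]_(m, n)) (mu : R) : Prop :=
  (forall i j, mu <= M i j) /\ (exists i j, M i j = mu).

Definition frob2 (m n : nat) (M : 'M[R]_(m, n)) : R :=
  \sum_i \sum_j (M i j) ^+ 2.

Definition Atilde (p n : nat) (A : 'M[R]_(p, n)) (beta : R) : 'M[R]_(1 + p, n) :=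
  col_mx (const_mx (Num.sqrt beta)) A.

Definition Wmat (p n : nat) (A : 'M[R]_(p, n)) (beta : R) : 'M[R]_n :=
  (Atilde A beta)^T *m Atilde A beta.

Definition graph_laplacian (n : nat) (W : 'M[R]_n) : 'M[R]_n :=
  diag_mx (W *m ones n)^T - W.

Definition lin_kernel (p : nat) (beta : R) (a b : 'cV[R]_p) : R :=
  (a^T *m b) 0 0 + beta.

Definition pca_solution (p n r : nat) (A : 'M[R]_(p, n)) (X : 'M[R]_(r, n)) : Prop :=
  X *m X^T = 1%:M /\
  exists D : 'M[R]_(p, r),
    forall (D' : 'M[R]_(p, r)) (X' : 'M[R]_(r, n)),
      X' *m X'^T = 1%:M -> frob2 (A - D *m X) <= frob2 (A - D' *m X').

Definition Xtilde (n r : nat) (X : 'M[R]_(r, n)) : 'M[R]_(1 + r, n) :=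
  col_mx (const_mx (Num.sqrt (n%:R))^-1) X.

Definition le_solution (n r : nat) (L : 'M[R]_n) (X : 'M[R]_(r, n)) : Prop :=
  Xtilde X *m (Xtilde X)^T = 1%:M /\
  forall X' : 'M[R]_(r, n),
    Xtilde X' *m (Xtilde X')^T = 1%:M ->
    \tr (Xtilde X *m L *m (Xtilde X)^T) <= \tr (Xtilde X' *m L *m (Xtilde X')^T).

Definition compact_svd (p n : nat) (A : 'M[R]_(p, n))
    (U : 'M[R]_(p, \rank A)) (s : 'rV[R]_(\rank A)) (V : 'M[R]_(\rank A, n)) : Prop :=
  [/\ U^T *m U = 1%:M, V *m V^T = 1%:M,
      (forall i, 0 < s 0 i),
      (forall i j : 'I_(\rank A), (i <= j)%N -> s 0 j <= s 0 i)
    & A = U *m diag_mx s *m V].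

Definition first_rows (k n r : nat) (hr : (r <= k)%N) (V : 'M[R]_(k, n)) : 'M[R]_(r, n) :=
  rowsub (widen_ord hr) V.

End Defs.

(* Main.v *)
Require Import Defs.
From HB Require Import structures.
From mathcomp Require Import all_boot all_order all_algebra.
From mathcomp Require Import ring lra.
Set Implicit Arguments. Unset Strict Implicit. Unset Printing Implicit Defensive.
Import Order.TTheory GRing.Theory Num.Theory.
Local Open Scope ring_scope.

Lemma frob2_tr (R : rcfType) m n (M : 'M[R]_(m,n)) : frob2 M = \tr (M *m M^T).
Proof.
rewrite /frob2 /mxtrace; apply: eq_bigr => i _; rewrite !mxE.
by apply: eq_bigr => j _; rewrite !mxE expr2.
Qed.

Lemma tr_ge0 (R : rcfType) m n (M : 'M[R]_(m,n)) : 0 <= \tr (M *m M^T).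
Proof.
rewrite -frob2_tr /frob2; apply: sumr_ge0 => i _; apply: sumr_ge0 => j _.
exact: sqr_ge0.
Qed.

Lemma tr_eq0 (R : rcfType) m n (M : 'M[R]_(m,n)) : \tr (M *m M^T) = 0 -> M = 0.
Proof.
rewrite -frob2_tr /frob2 => h; apply/matrixP => i j; rewrite mxE.
have := @psumr_eq0P _ _ _ _ (fun i _ => sumr_ge0 _ (fun j _ => sqr_ge0 (M i j))) h i isT.
move=> /(@psumr_eq0P _ _ _ _ (fun j _ => sqr_ge0 (M i j))) /(_ j isT) /eqP.
by rewrite sqrf_eq0 => /eqP.
Qed.

Lemma tr_gt0 (R : rcfType) m n (M : 'M[R]_(m,n)) : M != 0 -> 0 < \tr (M *m M^T).
Proof.
move=> hM; rewrite lt_def tr_ge0 andbT; apply/eqP => h; move/eqP: hM; apply.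
exact: tr_eq0.
Qed.

Lemma mx11_tr (R : rcfType) (a : 'M[R]_1) : a^T = a.
Proof. by apply/matrixP => i j; rewrite !ord1 mxE. Qed.

Definition dot (R : rcfType) n (u v : 'cV[R]_n) : R := (u^T *m v) 0 0.

Lemma dotE (R : rcfType) n (u v : 'cV[R]_n) : u^T *m v = (dot u v)%:M.
Proof. exact: mx11_scalar. Qed.

Lemma dotC (R : rcfType) n (u v : 'cV[R]_n) : dot u v = dot v u.
Proof. by rewrite /dot -(mx11_tr (u^T *m v)) trmx_mul trmxK. Qed.

Lemma trmxD (R : rcfType) m n (A B : 'M[R]_(m,n)) : (A + B)^T = A^T + B^T.
Proof. by apply/matrixP => i j; rewrite !mxE. Qed.
Lemma trmxB (R : rcfType) m n (A B : 'M[R]_(m,n)) : (A - B)^T = A^T - B^T.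
Proof. by apply/matrixP => i j; rewrite !mxE. Qed.
Lemma trmxZ (R : rcfType) m n (a : R) (A : 'M[R]_(m,n)) : (a *: A)^T = a *: A^T.
Proof. by apply/matrixP => i j; rewrite !mxE. Qed.
Lemma mxtraceB (R : rcfType) n (a b : 'M[R]_n) : \tr (a - b) = \tr a - \tr b.
Proof. by rewrite /mxtrace -sumrB; apply: eq_bigr => i _; rewrite !mxE. Qed.
Lemma mxtraceD' (R : rcfType) n (a b : 'M[R]_n) : \tr (a + b) = \tr a + \tr b.
Proof. by rewrite /mxtrace -big_split; apply: eq_bigr => i _; rewrite !mxE. Qed.
Lemma frob20 (R : rcfType) m n : frob2 (0 : 'M[R]_(m,n)) = 0.
Proof. by rewrite frob2_tr mul0mx /mxtrace big1 // => i _; rewrite mxE. Qed.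
Lemma mx11P (R : rcfType) (a b : 'M[R]_1) : a 0 0 = b 0 0 -> a = b.
Proof. by move=> h; rewrite [a]mx11_scalar [b]mx11_scalar h. Qed.
Lemma scalar11E (R : rcfType) (a : R) : (a%:M : 'M[R]_1) 0 0 = a.
Proof. by rewrite mxE eqxx mulr1n. Qed.


Lemma swap_orth (R : rcfType) r n (X : 'M[R]_(r,n)) (q : 'cV[R]_r) (z : 'cV[R]_n) :
  X *m X^T = 1%:M -> q^T *m q = 1%:M -> z^T *m z = 1%:M ->
  X *m z = dot (X^T *m q) z *: q ->
  (X + q *m (z - X^T *m q)^T) *m (X + q *m (z - X^T *m q)^T)^T = 1%:M /\
  (X + q *m (z - X^T *m q)^T)^T *m (X + q *m (z - X^T *m q)^T)
     = X^T *m X - (X^T *m q) *m (X^T *m q)^T + z *m z^T.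
Proof.
move=> hXX hq hz hXz.
set y := X^T *m q; set c := dot y z.
have Xy : X *m y = q by rewrite /y mulmxA hXX mul1mx.
have yy : y^T *m y = 1%:M.
  by rewrite /y trmx_mul trmxK mulmxA -(mulmxA q^T) hXX mulmx1 hq.
have yz : y^T *m z = c%:M by rewrite dotE.
have zy : z^T *m y = c%:M by rewrite dotE dotC.
have hd : X *m (z - y) = (c - 1) *: q by rewrite mulmxBr hXz Xy scalerBl scale1r.
have dd : (z - y)^T *m (z - y) = (2 - 2 * c)%:M.
  rewrite trmxB mulmxBl !mulmxBr hz yy yz zy.
  apply/matrixP => i j; rewrite !mxE; ring.
have qy : q^T *m X = y^T by rewrite /y trmx_mul trmxK.
set d := z - y.
split.
  rewrite trmxD trmx_mul trmxK mulmxDl !mulmxDr.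
  rewrite hXX mulmxA hd -mulmxA -trmx_mul hd mulmxA -(mulmxA q) dd.
  rewrite trmxZ -scalemxAr -scalemxAl mul_mx_scalar -scalemxAl.
  move: (q *m q^T) => Q; apply/matrixP => i j; rewrite !mxE; ring.
rewrite trmxD trmx_mul trmxK mulmxDl !mulmxDr.
rewrite !mulmxA -/y -(mulmxA d q^T X) qy -(mulmxA d q^T q) hq mulmx1.
rewrite /d trmxB !mulmxBl !mulmxBr.
move: (y *m y^T) (y *m z^T) (z *m y^T) (z *m z^T) (X^T *m X) => a b d0 e f.
apply/matrixP => i j; rewrite !mxE; ring.
Qed.


Definition gA (R : rcfType) p n r (A : 'M[R]_(p,n)) (X : 'M[R]_(r,n)) : R :=
  \tr (A *m (X^T *m X) *m A^T).

Lemma pca_key (R : rcfType) p n r (A : 'M[R]_(p,n)) (D : 'M[R]_(p,r)) (X : 'M[R]_(r,n)) :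
  X *m X^T = 1%:M ->
  frob2 (A - D *m X) = \tr (A *m A^T) - gA A X + frob2 (D - A *m X^T).
Proof.
move=> hX; rewrite !frob2_tr /gA !trmxB !trmx_mul !trmxK !mulmxBl !mulmxBr.
rewrite !mulmxA -(mulmxA D X X^T) hX mulmx1.
move: (A *m A^T) (A *m X^T *m D^T) (D *m X *m A^T) (D *m D^T) (A *m X^T *m X *m A^T).
move=> a b c e f; rewrite !mxtraceB; ring.
Qed.

Lemma pca_iff (R : rcfType) p n r (A : 'M[R]_(p,n)) (X : 'M[R]_(r,n)) :
  pca_solution A X <->
  X *m X^T = 1%:M /\ (forall X' : 'M[R]_(r,n), X' *m X'^T = 1%:M -> gA A X' <= gA A X).
Proof.
split.
  move=> [hX [D hD]]; split => // X' hX'.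
  have := hD (A *m X'^T) X' hX'.
  rewrite (pca_key _ _ hX) (pca_key _ _ hX') subrr frob20 addr0.
  have := tr_ge0 (D - A *m X^T); rewrite -frob2_tr; lra.
move=> [hX hmax]; split => //; exists (A *m X^T) => D' X' hX'.
rewrite (pca_key _ _ hX) (pca_key _ _ hX') subrr frob20 addr0.
have := tr_ge0 (D' - A *m X'^T); have := hmax X' hX'; rewrite -frob2_tr; lra.
Qed.


Lemma W_entry (R : rcfType) p n (A : 'M[R]_(p,n)) beta : 0 <= beta ->
  forall i j, Wmat A beta i j = beta + (A^T *m A) i j.
Proof.
move=> hb i j; rewrite /Wmat /Atilde tr_col_mx mul_row_col mxE; congr (_ + _).
by rewrite mxE big_ord1 !mxE -expr2 sqr_sqrtr.
Qed.

Lemma W_eq (R : rcfType) p n (A : 'M[R]_(p,n)) beta : 0 <= beta ->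
  Wmat A beta = beta *: (ones R n *m (ones R n)^T) + A^T *m A.
Proof.
move=> hb; apply/matrixP => i j; rewrite W_entry // !mxE big_ord1 !mxE mulr1.
by rewrite mulr1.
Qed.

Lemma ones_dot (R : rcfType) n : (ones R n)^T *m ones R n = (n%:R)%:M.
Proof.
apply/matrixP => i j; rewrite !ord1 !mxE /=.
rewrite (eq_bigr (fun _ => 1)); last by move=> k _; rewrite !mxE mulr1.
by rewrite sumr_const card_ord.
Qed.

Lemma W_ones (R : rcfType) p n (A : 'M[R]_(p,n)) beta : 0 <= beta ->
  A *m ones R n = 0 ->
  Wmat A beta *m ones R n = (n%:R * beta) *: ones R n.
Proof.
move=> hb hA; rewrite W_eq // mulmxDl -mulmxA hA mulmx0 addr0.
rewrite -scalemxAl -mulmxA ones_dot mul_mx_scalar scalerA mulrC.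
done.
Qed.

Lemma L_eq (R : rcfType) p n (A : 'M[R]_(p,n)) beta : 0 <= beta ->
  A *m ones R n = 0 ->
  graph_laplacian (Wmat A beta) = (n%:R * beta)%:M - Wmat A beta.
Proof.
move=> hb hA; rewrite /graph_laplacian W_ones // /ones scalemx_const trmx_const.
by rewrite diag_const_mx mulr1.
Qed.

Lemma L_ones (R : rcfType) p n (A : 'M[R]_(p,n)) beta : 0 <= beta ->
  A *m ones R n = 0 ->
  graph_laplacian (Wmat A beta) *m ones R n = 0.
Proof.
move=> hb hA; rewrite L_eq // mulmxBl W_ones // mul_scalar_mx subrr //.
Qed.

Lemma Xt_orth (R : rcfType) n r (X : 'M[R]_(r,n)) : (0 < n)%N ->
  Xtilde X *m (Xtilde X)^T = 1%:M <-> X *m X^T = 1%:M /\ X *m ones R n = 0.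
Proof.
move=> hn.
set c := (Num.sqrt (n%:R : R))^-1.
have hc : c != 0 by rewrite invr_eq0 gt_eqF // sqrtr_gt0 ltr0n.
have ha : (const_mx c : 'M[R]_(1,n))^T = c *: ones R n.
  by rewrite trmx_const /ones scalemx_const mulr1.
have haa : (const_mx c : 'M[R]_(1,n)) *m (const_mx c)^T = 1%:M.
  rewrite ha -scalemxAr -[const_mx c]trmxK ha trmxZ -scalemxAl ones_dot scalerA.
  rewrite -expr2 exprVn sqr_sqrtr ?ler0n // -scalemx1 scalerA mulVf ?scale1r //.
  by rewrite pnatr_eq0 -lt0n.
rewrite /Xtilde tr_col_mx mul_col_row scalar_mx_block; split.
  move=> /eq_block_mx [_ _ h1 h2]; split => //.
  by move: h1; rewrite ha -scalemxAr => /eqP; rewrite scaler_eq0 (negbTE hc) => /eqP.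
move=> [h1 h2]; rewrite haa h1 ha -scalemxAr h2 scaler0.
have -> : (const_mx c : 'M[R]_(1,n)) *m X^T = 0.
  by rewrite -[const_mx c]trmxK -trmx_mul ha -scalemxAr h2 scaler0 trmx0.
done.
Qed.

Lemma gA_alt (R : rcfType) p n r (A : 'M[R]_(p,n)) (X : 'M[R]_(r,n)) :
  gA A X = \tr (X *m (A^T *m A) *m X^T).
Proof. by rewrite /gA mulmxA -(mulmxA (A *m X^T)) mxtrace_mulC !mulmxA. Qed.

Lemma LE_trace (R : rcfType) p n r (A : 'M[R]_(p,n)) beta (X : 'M[R]_(r,n)) :
  0 <= beta -> A *m ones R n = 0 ->
  X *m X^T = 1%:M -> X *m ones R n = 0 ->
  \tr (Xtilde X *m graph_laplacian (Wmat A beta) *m (Xtilde X)^T)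
    = n%:R * beta * r%:R - gA A X.
Proof.
move=> hb hA h1 h2.
set c := (Num.sqrt (n%:R : R))^-1.
have ha : (const_mx c : 'M[R]_(1,n))^T = c *: ones R n.
  by rewrite trmx_const /ones scalemx_const mulr1.
rewrite /Xtilde mul_col_mx tr_col_mx mul_col_row mxtrace_block.
rewrite -/c -mulmxA ha -scalemxAr L_ones // scaler0 mulmx0 mxtrace0 add0r.
rewrite L_eq // W_eq // mulmxBr mulmxDr !mulmxBl mulmxDl.
have -> : X *m (beta *: (ones R n *m (ones R n)^T)) *m X^T = 0.
  by rewrite -scalemxAr mulmxA h2 mul0mx scaler0 mul0mx.
rewrite add0r mxtraceB mul_mx_scalar -scalemxAl h1 mxtraceZ mxtrace1 gA_alt.
done.
Qed.

Lemma le_iff (R : rcfType) p n r (A : 'M[R]_(p,n)) beta (X : 'M[R]_(r,n)) :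
  (0 < n)%N -> 0 <= beta -> A *m ones R n = 0 ->
  le_solution (graph_laplacian (Wmat A beta)) X <->
  [/\ X *m X^T = 1%:M, X *m ones R n = 0 &
     forall X' : 'M[R]_(r,n), X' *m X'^T = 1%:M -> X' *m ones R n = 0 ->
       gA A X' <= gA A X].
Proof.
move=> hn hb hA; rewrite /le_solution; split.
  move=> [/(Xt_orth _ hn) [h1 h2] hmin]; split => // X' h1' h2'.
  have := hmin X' (proj2 (Xt_orth X' hn) (conj h1' h2')); rewrite !LE_trace //.
  lra.
move=> [h1 h2 hmax]; split; first by apply/Xt_orth.
move=> X' /(Xt_orth _ hn) [h1' h2']; rewrite !LE_trace //.
have := hmax X' h1' h2'; lra.
Qed.


Lemma tr11 (R : rcfType) (a : 'M[R]_1) : \tr a = a 0 0.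
Proof. by rewrite /mxtrace big_ord1. Qed.

Lemma dot_gt0 (R : rcfType) n (u : 'cV[R]_n) : u != 0 -> 0 < dot u u.
Proof.
move=> hu; have : u^T != 0 by apply: contra hu => /eqP/(congr1 trmx); rewrite trmxK trmx0 => ->.
by move/tr_gt0; rewrite trmxK tr11.
Qed.

Lemma dotZr (R : rcfType) n (u v : 'cV[R]_n) k : dot u (k *: v) = k * dot u v.
Proof. by rewrite /dot -scalemxAr mxE. Qed.

Lemma gA_swap (R : rcfType) p n r (A : 'M[R]_(p,n)) (X X2 : 'M[R]_(r,n)) (y z : 'cV[R]_n) :
  X2^T *m X2 = X^T *m X - y *m y^T + z *m z^T ->
  gA A X2 = gA A X - \tr (A *m y *m (A *m y)^T) + \tr (A *m z *m (A *m z)^T).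
Proof.
move=> h; rewrite /gA h mulmxDr mulmxBr mulmxDl mulmxBl mxtraceD' mxtraceB.
by rewrite !trmx_mul !mulmxA.
Qed.

Lemma finish (R : rcfType) p n r (A : 'M[R]_(p,n)) (X : 'M[R]_(r,n)) (q : 'cV[R]_r)
  (zz : 'cV[R]_n) (m : R) :
  X *m X^T = 1%:M -> q^T *m q = 1%:M -> X *m ones R n = m *: q ->
  zz != 0 -> X *m zz = dot (X^T *m q) zz *: q -> zz^T *m ones R n = 0 ->
  \tr (A *m (X^T *m q) *m (A *m (X^T *m q))^T) * dot zz zz
     < \tr (A *m zz *m (A *m zz)^T) ->
  exists X2 : 'M[R]_(r,n),
    [/\ X2 *m X2^T = 1%:M, X2 *m ones R n = 0 & gA A X < gA A X2].
Proof.
move=> hX hq hw hzz hXzz hz1 hlt.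
set y := X^T *m q in hlt hXzz *.
set s := dot zz zz in hlt.
have s0 : 0 < s by apply: dot_gt0.
set k := (Num.sqrt s)^-1.
have k2 : k * k * s = 1.
  rewrite /k -expr2 exprVn sqr_sqrtr ?ltW // mulVf //; exact: lt0r_neq0.
set z := k *: zz.
have hz : z^T *m z = 1%:M.
  by rewrite /z trmxZ -scalemxAl -scalemxAr dotE -/s !scale_scalar_mx mulrA k2.
have hXz : X *m z = dot y z *: q.
  by rewrite /z -scalemxAr hXzz dotZr scalerA.
have [h1 h2] := swap_orth hX hq hz hXz.
exists (X + q *m (z - X^T *m q)^T); split => //.
  have yo : y^T *m ones R n = m%:M.
    by rewrite /y trmx_mul trmxK -mulmxA hw -scalemxAr hq scalemx1.
  rewrite -/y mulmxDl -mulmxA trmxB mulmxBl yo /z trmxZ -scalemxAl hz1 scaler0 sub0r.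
  by rewrite mulmxN mul_mx_scalar hw subrr.
rewrite (gA_swap A h2) -/y /z -scalemxAr trmxZ -scalemxAl -scalemxAr mxtraceZ.
rewrite -/y in hlt.
set G := \tr (A *m y *m (A *m y)^T) in hlt *.
set T := \tr (A *m zz *m (A *m zz)^T) in hlt *.
have : G < k * k * T.
  have kk : 0 < k * k by rewrite mulr_gt0 // invr_gt0 sqrtr_gt0.
  have := hlt; rewrite -(ltr_pM2l kk).
  rewrite (_ : k * k * (G * s) = G * (k * k * s)); last by ring.
  by rewrite k2 mulr1.
by rewrite mxtraceZ -/T mulrA; lra.
Qed.


Lemma rank_ker_lt (R : rcfType) p r (B : 'M[R]_(p,r)) (q : 'cV[R]_r) :
  q != 0 -> B *m q = 0 -> (\rank B < r)%N.
Proof.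
move=> hq hB.
have hk : (q^T <= kermx B^T)%MS by rewrite sub_kermx -trmx_mul hB trmx0.
have := mxrankS hk; rewrite mxrank_ker (mxrank_tr B).
have : (0 < \rank q^T)%N.
  rewrite lt0n mxrank_eq0; apply: contra hq => /eqP/(congr1 trmx).
  by rewrite trmxK trmx0 => ->.
move=> h2 h3; have := leq_trans h2 h3.
by rewrite subn_gt0.
Qed.

Lemma nonzero_col (R : rcfType) p (B : 'M[R]_p) : B != 0 ->
  exists u : 'cV[R]_p, B *m u != 0.
Proof.
move=> hB.
have [j hj|hall] := pickP (fun j : 'I_p => B *m (delta_mx j 0 : 'cV[R]_p) != 0).
  by exists (delta_mx j 0).
exfalso; move/eqP: hB => hB; apply: hB.
apply/matrixP => i j; have := hall j.
move/negbT/negPn/eqP => /(congr1 (fun M : 'cV[R]_p => M i 0)).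
by rewrite -colE !mxE.
Qed.

Lemma improve (R : rcfType) p n r (A : 'M[R]_(p,n)) (X : 'M[R]_(r,n)) :
  (0 < n)%N -> A *m ones R n = 0 -> (r <= \rank A)%N ->
  X *m X^T = 1%:M -> X *m ones R n != 0 ->
  exists X2 : 'M[R]_(r,n),
    [/\ X2 *m X2^T = 1%:M, X2 *m ones R n = 0 & gA A X < gA A X2].
Proof.
move=> hn hA hr hX hw0.
set w := X *m ones R n in hw0.
set nw := dot w w.
have nw0 : 0 < nw by apply: dot_gt0.
set m := Num.sqrt nw.
have m0 : 0 < m by rewrite sqrtr_gt0.
have mm : m * m = nw by rewrite -expr2 sqr_sqrtr // ltW.
set q := m^-1 *: w.
have hq : q^T *m q = 1%:M.
  rewrite /q trmxZ -scalemxAl -scalemxAr dotE -/nw !scale_scalar_mx -mm.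
  congr (_%:M); field; exact: lt0r_neq0 m0.
have hw : X *m ones R n = m *: q by rewrite /q scalerA mulfV ?scale1r // gt_eqF.
have q0 : q != 0.
  apply/negP => /eqP q0; move: hq; rewrite q0 mulmx0 => /eqP.
  by rewrite eq_sym (negbTE (matrix_nonzero1 _ 0)).
set y := X^T *m q.
have Xy : X *m y = q by rewrite /y mulmxA hX mul1mx.
have yy : y^T *m y = 1%:M.
  by rewrite /y trmx_mul trmxK mulmxA -(mulmxA q^T) hX mulmx1 hq.
have yo : y^T *m ones R n = m%:M.
  by rewrite /y trmx_mul trmxK -mulmxA hw -scalemxAr hq scalemx1.
have [Ay0|Ay0] := eqVneq (A *m y) 0.
  set P := X^T *m X.
  have PP : P *m P = P by rewrite /P mulmxA -(mulmxA X^T) hX mulmx1.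
  have Py : P *m y = y by rewrite /P -mulmxA Xy.
  have PT : P^T = P by rewrite /P trmx_mul trmxK.
  have yP : y^T *m P = y^T by rewrite -PT -trmx_mul Py.
  set Q := 1%:M - P + y *m y^T.
  have QT : Q^T = Q by rewrite /Q trmxD trmxB trmx1 PT trmx_mul trmxK.
  have QQ : Q *m Q = Q.
    have e1 : P *m (y *m y^T) = y *m y^T by rewrite mulmxA Py.
    have e2 : y *m y^T *m P = y *m y^T by rewrite -mulmxA yP.
    have e3 : y *m y^T *m (y *m y^T) = y *m y^T by rewrite mulmxA -(mulmxA y) yy mulmx1.
    rewrite /Q !mulmxDl !mulmxDr ?mulNmx ?mulmxN !mul1mx !mulmx1 ?mulNmx ?mulmxN opprK PP e1 e2 e3.
    set b := y *m y^T; apply/matrixP => i j; rewrite !mxE; ring.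
  have XQ : X *m Q = q *m y^T.
    by rewrite /Q mulmxDr mulmxBr mulmx1 /P !mulmxA hX !mul1mx subrr add0r.
  have yQ : y^T *m Q = y^T.
    by rewrite /Q mulmxDr mulmxBr mulmx1 yP subrr add0r mulmxA yy mul1mx.
  have Qo : Q *m ones R n = ones R n.
    rewrite /Q mulmxDl mulmxBl mul1mx /P -mulmxA hw -mulmxA yo -scalemxAr.
    by rewrite mul_mx_scalar -/y subrK.
  set B := A *m Q *m A^T.
  have B0 : B != 0.
    apply/eqP => hB.
    have AQ : A *m Q = 0.
      apply: tr_eq0; rewrite trmx_mul QT mulmxA -(mulmxA A Q Q) QQ -/B hB.
      exact: mxtrace0.
    have eA : A = (A *m X^T) *m X.
      move: AQ; rewrite /Q mulmxDr mulmxBr mulmx1 mulmxA Ay0 mul0mx addr0.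
      by move=> /eqP; rewrite subr_eq0 => /eqP hAP; rewrite {1}hAP /P mulmxA.
    have hAq : (A *m X^T) *m q = 0 by rewrite -mulmxA -/y Ay0.
    have hlt := rank_ker_lt q0 hAq.
    have := mxrankM_maxl (A *m X^T) X; rewrite -eA => h.
    have := leq_ltn_trans (leq_trans hr h) hlt.
    by rewrite ltnn.
  have [u hu] := nonzero_col B0.
  set zz := Q *m (A^T *m u).
  have Azz : A *m zz = B *m u by rewrite /zz /B !mulmxA.
  have zz0 : zz != 0 by apply: contra hu => /eqP z0; rewrite -Azz z0 mulmx0.
  have hXzz : X *m zz = dot y zz *: q.
    have e : y^T *m zz = y^T *m (A^T *m u) by rewrite /zz (mulmxA y^T Q) yQ.
    rewrite /dot e /zz (mulmxA X Q) XQ -mulmxA.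
    by rewrite {1}[y^T *m (A^T *m u)]mx11_scalar mul_mx_scalar.
  have hz1 : zz^T *m ones R n = 0.
    by rewrite /zz trmx_mul QT -mulmxA Qo trmx_mul trmxK -mulmxA hA mulmx0.
  apply: (finish hX hq hw zz0 hXzz hz1).
  rewrite Ay0 mul0mx mxtrace0 mul0r Azz; exact: tr_gt0.
set zz := y - (m / n%:R) *: ones R n.
have n0 : (n%:R : R) != 0 by rewrite pnatr_eq0 -lt0n.
have Azz : A *m zz = A *m y by rewrite mulmxBr -scalemxAr hA scaler0 subr0.
have zz0 : zz != 0 by apply: contra Ay0 => /eqP z0; rewrite -Azz z0 mulmx0.
have yzz : dot y zz = 1 - m / n%:R * m.
  rewrite /dot mulmxBr yy -scalemxAr yo !mxE !eqxx /= !mulr1n.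
  done.
have hXzz : X *m zz = dot y zz *: q.
  by rewrite yzz mulmxBr Xy -scalemxAr hw scalerA scalerBl scale1r.
have hz1 : zz^T *m ones R n = 0.
  rewrite trmxB trmxZ mulmxBl yo -scalemxAl ones_dot scale_scalar_mx.
  apply: mx11P; rewrite !mxE eqxx /= !mulr1n; field; done.
have zzzz : dot zz zz = dot y zz.
  by rewrite dotC /dot {2}/zz mulmxBr -scalemxAr hz1 scaler0 subr0 -/(dot zz y) dotC.
apply: (finish hX hq hw zz0 hXzz hz1).
rewrite Azz zzzz yzz.
have G0 := tr_gt0 Ay0.
have mn : 0 < m / n%:R * m by rewrite mulr_gt0 // divr_gt0 // ltr0n.
set G := \tr _ in G0 *.
rewrite mulrBr mulr1; rewrite ltrBlDr ltrDl; exact: mulr_gt0.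
Qed.


Lemma gA_svd (R : rcfType) p n r (A : 'M[R]_(p,n)) (U : 'M[R]_(p, \rank A)) (s : 'rV[R]_(\rank A)) (V : 'M[R]_(\rank A, n)) (X : 'M[R]_(r,n)) :
  compact_svd U s V ->
  gA A X = \sum_i (s 0 i) ^+ 2 * ((V *m X^T) *m (V *m X^T)^T) i i.
Proof.
case=> hU hV _ _ hA.
set C := (V *m X^T) *m (V *m X^T)^T.
have -> : gA A X = \tr (diag_mx s *m C *m diag_mx s).
  have hAT : A^T = V^T *m diag_mx s *m U^T.
    by rewrite [in LHS]hA !trmx_mul tr_diag_mx mulmxA.
  rewrite /gA hAT {1}hA /C trmx_mul trmxK.
  rewrite !mulmxA mxtrace_mulC !mulmxA hU mul1mx.
  by rewrite -!mulmxA.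
rewrite /mxtrace; apply: eq_bigr => i _.
rewrite mul_mx_diag mxE mul_diag_mx mxE; ring.
Qed.

Lemma proj_comp (R : rcfType) a b c (Y : 'M[R]_(a,b)) (Z : 'M[R]_(c,b)) :
  Y *m Y^T = 1%:M ->
  Z *m Z^T - (Z *m Y^T) *m (Z *m Y^T)^T
    = (Z *m (1%:M - Y^T *m Y)) *m (Z *m (1%:M - Y^T *m Y))^T.
Proof.
move=> hY.
have MT : (1%:M - Y^T *m Y)^T = 1%:M - Y^T *m Y by rewrite trmxB trmx1 trmx_mul trmxK.
have MM : (1%:M - Y^T *m Y) *m (1%:M - Y^T *m Y) = 1%:M - Y^T *m Y.
  rewrite mulmxBl mul1mx mulmxBr mulmx1 mulmxA -(mulmxA Y^T Y) hY mulmx1.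
  by rewrite subrr subr0.
set M := 1%:M - Y^T *m Y in MT MM *.
rewrite [in RHS]trmx_mul MT mulmxA -(mulmxA Z M M) MM /M mulmxBr mulmx1 mulmxBl.
by rewrite trmx_mul trmxK !mulmxA.
Qed.

Lemma diag_ge0 (R : rcfType) a b (B : 'M[R]_(a,b)) i : 0 <= (B *m B^T) i i.
Proof. by rewrite mxE; apply: sumr_ge0 => j _; rewrite mxE -expr2 sqr_ge0. Qed.

Lemma c_le1 (R : rcfType) k n r (V : 'M[R]_(k,n)) (X : 'M[R]_(r,n)) i :
  V *m V^T = 1%:M -> X *m X^T = 1%:M ->
  ((V *m X^T) *m (V *m X^T)^T) i i <= 1.
Proof.
move=> hV hX.
have := proj_comp V hX; rewrite hV => /(congr1 (fun M : 'M[R]_k => M i i)).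
have := diag_ge0 (V *m (1%:M - X^T *m X)) i.
set C := (V *m X^T *m _). set D := (V *m _ *m _).
move=> hD h; rewrite -h !mxE eqxx mulr1n in hD; move: hD; rewrite /C mxE; lra.
Qed.

Lemma c_sum (R : rcfType) k n r (V : 'M[R]_(k,n)) (X : 'M[R]_(r,n)) :
  V *m V^T = 1%:M -> X *m X^T = 1%:M ->
  \sum_i ((V *m X^T) *m (V *m X^T)^T) i i <= r%:R.
Proof.
move=> hV hX.
have := proj_comp X hV; rewrite hX => /(congr1 (@mxtrace _ r)).
rewrite mxtraceB mxtrace1 => h.
have e : \tr ((X *m V^T) *m (X *m V^T)^T) = \sum_i ((V *m X^T) *m (V *m X^T)^T) i i.
  by rewrite mxtrace_mulC !trmx_mul !trmxK.
have := tr_ge0 (X *m (1%:M - V^T *m V)); rewrite -h -e; lra.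
Qed.

Lemma VVr (R : rcfType) k n r (hr : (r <= k)%N) (V : 'M[R]_(k,n)) i j :
  (V *m (first_rows hr V)^T) i j = (V *m V^T) i (widen_ord hr j).
Proof. by rewrite !mxE; apply: eq_bigr => l _; rewrite !mxE. Qed.

Lemma Vr_orth (R : rcfType) k n r (hr : (r <= k)%N) (V : 'M[R]_(k,n)) :
  V *m V^T = 1%:M -> first_rows hr V *m (first_rows hr V)^T = 1%:M.
Proof.
move=> hV; apply/matrixP => i j.
have -> : (first_rows hr V *m (first_rows hr V)^T) i j
          = (V *m V^T) (widen_ord hr i) (widen_ord hr j).
  by rewrite !mxE; apply: eq_bigr => l _; rewrite !mxE.
by rewrite hV !mxE.
Qed.

Lemma c_Vr (R : rcfType) k n r (hr : (r <= k)%N) (V : 'M[R]_(k,n)) i :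
  V *m V^T = 1%:M ->
  ((V *m (first_rows hr V)^T) *m (V *m (first_rows hr V)^T)^T) i i = (i < r)%N%:R.
Proof.
move=> hV; rewrite mxE.
rewrite (eq_bigr (fun j : 'I_r => ((i == widen_ord hr j)%:R : R))); last first.
  move=> j _; rewrite [X in _ * X]mxE !VVr hV !mxE.
  by case: (i == widen_ord hr j); rewrite ?mulr1 ?mulr0.
case: ltnP => hi.
  rewrite (bigD1 (Ordinal hi)) //= big1 ?addr0.
    by have -> : i == widen_ord hr (Ordinal hi) by apply/eqP/val_inj.
  move=> j hj; case: eqP => // hij; move/eqP: hj; case; apply/val_inj.
  by rewrite /= hij.
rewrite big1 // => j _; case: eqP => // hij; move: (ltn_ord j).
by rewrite -[nat_of_ord j]/(nat_of_ord (widen_ord hr j)) -hij ltnNge hi.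
Qed.

Lemma sum_lt (R : rcfType) k r : (r <= k)%N -> \sum_(i < k) ((i < r)%N%:R : R) = r%:R.
Proof.
move=> hr.
rewrite (eq_bigr (fun i : 'I_k => if (i < r)%N then (1:R) else 0)); last first.
  by move=> i _; case: ifP.
rewrite -big_mkcond -(big_ord_widen _ (fun _ => (1:R)) hr) sumr_const card_ord.
done.
Qed.

Lemma kyfan (R : rcfType) p n r (A : 'M[R]_(p,n)) (hr : (r <= \rank A)%N)
  (U : 'M[R]_(p, \rank A)) (s : 'rV[R]_(\rank A)) (V : 'M[R]_(\rank A, n)) :
  (0 < r)%N -> compact_svd U s V ->
  forall X : 'M[R]_(r,n), X *m X^T = 1%:M -> gA A X <= gA A (first_rows hr V).
Proof.
move=> hr0 svd X hX; have [hU hV hpos hdesc hA] := svd.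
rewrite (gA_svd X svd) (gA_svd (first_rows hr V) svd).
under [in X in _ <= X]eq_bigr => i _ do rewrite c_Vr //.
set c := fun i => ((V *m X^T) *m (V *m X^T)^T) i i.
rewrite -/(c _).
have hi0 : (r.-1 < \rank A)%N by rewrite (leq_trans _ hr) // prednK.
set i0 := Ordinal hi0.
set T := s 0 i0 ^+ 2.
have T0 : 0 <= T by rewrite /T sqr_ge0.
have hterm : forall i, s 0 i ^+ 2 * c i - s 0 i ^+ 2 * (i < r)%N%:R
                       <= T * c i - T * (i < r)%N%:R.
  move=> i.
  have c1 : c i <= 1 by apply: c_le1.
  have c0 : 0 <= c i by apply: diag_ge0.
  case: ltnP => hi.
    have hle : s 0 i0 <= s 0 i by apply: hdesc; rewrite /= -ltnS prednK.
    have p0 := hpos i0.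
    have h1 : 0 <= s 0 i ^+ 2 - T by rewrite subr_ge0 /T lerXn2r // ?nnegrE ltW //.
    have h2 : 0 <= 1 - c i by lra.
    have := mulr_ge0 h1 h2; rewrite -/T /= mulr1; nra.
  have hle : s 0 i <= s 0 i0 by apply: hdesc; rewrite /= (leq_trans (leq_pred r) hi).
  have p0 := hpos i.
  have h1 : 0 <= T - s 0 i ^+ 2 by rewrite subr_ge0 /T lerXn2r // ?nnegrE ltW // (lt_le_trans p0).
  have := mulr_ge0 h1 c0; rewrite -/T /= mulr0; nra.
have hs1 : \sum_i (s 0 i ^+ 2 * c i - s 0 i ^+ 2 * (i < r)%N%:R)
           <= \sum_i (T * c i - T * (i < r)%N%:R).
  by apply: ler_sum => i _; exact: hterm.
rewrite !sumrB -!mulr_sumr sum_lt // in hs1.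
have hs := c_sum hV hX.
have hT := ler_wpM2l T0 hs.
rewrite /c /= in hs1 hT; lra.
Qed.


Theorem proposition1 (R : rcfType) (p n r : nat) (A : 'M[R]_(p, n)) (beta : R)
  (hA1 : A *m ones R n = 0)
  (hr0 : (0 < r)%N) (hr : (r <= \rank A)%N)
  (hbeta : is_min_entry (A^T *m A) (- beta)) :
  let W := Wmat A beta in
  let L := graph_laplacian W in
  [/\ (forall i j, 0 <= W i j),
      (forall i j, W i j = lin_kernel beta (col i A) (col j A)),
      (forall X : 'M[R]_(r, n), pca_solution A X <-> le_solution L X)
    & (forall (U : 'M[R]_(p, \rank A)) (s : 'rV[R]_(\rank A)) (V : 'M[R]_(\rank A, n)),
        compact_svd U s V ->
        pca_solution A (first_rows hr V) /\ le_solution L (first_rows hr V))].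
Proof.
move=> W L.
have [hmin [i0 [j0 _]]] := hbeta.
have hn : (0 < n)%N by apply: (leq_ltn_trans _ (ltn_ord i0)).
have hb : 0 <= beta.
  have h0 : (ones R n)^T *m (A^T *m A) *m ones R n = 0.
    by rewrite mulmxA -trmx_mul -mulmxA hA1 mulmx0.
  move/matrixP: h0 => /(_ 0 0); rewrite !mxE.
  under eq_bigr => j _ do rewrite !mxE mulr1.
  under eq_bigr => j _ do under eq_bigr => i _ do rewrite !mxE mul1r.
  move=> hs.
  have : \sum_(j < n) \sum_(i < n) (- beta) <= 0.
    rewrite -[X in _ <= X]hs; apply: ler_sum => j _; apply: ler_sum => i _.
    by move: (hmin i j); rewrite [(A^T *m A) i j]mxE.
  rewrite !sumr_const !card_ord -mulrnA -mulr_natr.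
  have : (0 : R) < (n * n)%N%:R by rewrite ltr0n muln_gt0 hn.
  move=> hk h; nra.
have key : forall X' : 'M[R]_(r,n), X' *m X'^T = 1%:M ->
    exists X2 : 'M[R]_(r,n), [/\ X2 *m X2^T = 1%:M, X2 *m ones R n = 0 & gA A X' <= gA A X2].
  move=> X' hX'; have [h1|h1] := eqVneq (X' *m ones R n) 0.
    by exists X'; split.
  have [X2 [? ? ?]] := improve hn hA1 hr hX' h1.
  by exists X2; split => //; apply: ltW.
have part3 : forall X : 'M[R]_(r, n), pca_solution A X <-> le_solution L X.
  move=> X; rewrite pca_iff /L /W le_iff //; split.
    move=> [hX hmax].
    have h1 : X *m ones R n = 0.
      apply/eqP; apply/negP => /negP h1.
      have [X2 [h2 _ h3]] := improve hn hA1 hr hX h1.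
      by have := hmax X2 h2; rewrite leNgt h3.
    by split => // X' hX' _; apply: hmax.
  move=> [hX h1 hmax]; split => // X' hX'.
  have [X2 [h2 h3 h4]] := key X' hX'.
  exact: le_trans h4 (hmax X2 h2 h3).
split => //.
- by move=> i j; rewrite /W W_entry //; have := hmin i j; lra.
- move=> i j; rewrite /W W_entry // /lin_kernel addrC; congr (_ + _).
  by rewrite !mxE; apply: eq_bigr => k _; rewrite !mxE.
move=> U s V svd.
have hpca : pca_solution A (first_rows hr V).
  apply/pca_iff; split; first by apply: Vr_orth; case: svd.
  exact: kyfan hr0 svd.
by split => //; apply/part3.
Qed.
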